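(* Let $f$ be a nonsingular $m$-stage FSR. Suppose $c,d\in\Omega(f)$ (possibly $c=d$), $u\in\Omega_m(c)$ and $u'\in\Omega_m(d)$, where $u'=u\oplus(1,0,\dots,0)$. Then $\min\big(\Omega_m(c)\cup\Omega_m(d)\big)<\min\{u,u'\}$, or $u\in\{(0,0,\dots,0),(1,0,\dots,0)\}$.
   Context: An $m$-stage FSR with feedback logic $f_1:\{0,1\}^m\to\{0,1\}$ has state transformation $F(x_0,\dots,x_{m-1})=(x_1,\dots,x_{m-1},f_1(x_0,\dots,x_{m-1}))$ and generates the binary sequences $s:\mathbb Z\to\{0,1\}$ with $s(t+m)=f_1(s(t),\dots,s(t+m-1))$ for all $t$. It is nonsingular if $F$ is bijective (equivalently all generated sequences are periodic). A periodic sequence $s$ of (least) period $p$ determines the cycle $[s(0),\dots,s(p-1)]$ (all shifts of $s$ give the same cycle), of period $p$. The cycle structure $\Omega(f)$ is the set of cycles of sequences generated by $f$. For a cycle $c$ determined by $s$ with period $p$, $\Omega_k(c)=\{(s(i),s((i+1)\bmod p),\dots,s((i+k-1)\bmod p)): 0\le i<p\}\subseteq\{0,1\}^k$. A vector $(a_0,\dots,a_{m-1})\in\{0,1\}^m$ is identified with the integer $\sum_{j=0}^{m-1}2^ja_j$, which defines the order and $\min$ on $\{0,1\}^m$. *)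

(* Defs.v *)
From mathcomp Require Import all_boot all_algebra.
Set Implicit Arguments. Unset Strict Implicit. Unset Printing Implicit Defensive.

Notation state m := (m.-tuple bool).

Definition tnat m (x : state m) : nat := \sum_(j < m) 2 ^ j * tnth x j.

Definition FSR_F m (f1 : state m -> bool) (x : state m) : state m :=
  [tuple (if i.+1 < m then nth false x i.+1 else f1 x) | i < m].

Definition nonsingular m (f1 : state m -> bool) : Prop := bijective (FSR_F f1).

Definition generated m (f1 : state m -> bool) (s : int -> bool) : Prop :=
  forall t : int, s (t + Posz m)%R = f1 [tuple s (t + Posz i)%R | i < m].

Definition least_period (s : int -> bool) (p : nat) : Prop :=
  [/\ (0 < p)%N,
      (forall t : int, s (t + Posz p)%R = s t) &
      (forall q : nat, (0 < q < p)%N -> ~ (forall t : int, s (t + Posz q)%R = s t))].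

(* Omega_k(c) for the cycle c determined by s of (least) period p:
   {(s(i), s((i+1) mod p), ..., s((i+k-1) mod p)) : 0 <= i < p}. *)
Definition Omega (k : nat) (s : int -> bool) (p : nat) : {set k.-tuple bool} :=
  [set [tuple s (Posz ((i + j) %% p)%N) | j < k] | i : 'I_p].

Definition zero_state m : state m := [tuple false | i < m].
Definition e0 m : state m := [tuple (i == 0 :> nat) | i < m].
Definition xor_e0 m (u : state m) : state m :=
  [tuple (tnth u i (+) tnth (e0 m) i) | i < m].

(* Minimum (w.r.t. the integer identification) of a set of states;
   2^m (larger than every state value) is returned for the empty set. *)
Definition minval m (A : {set state m}) : nat :=
  \big[minn/2 ^ m]_(w in A) tnat w.

(* Main.v *)
Require Import Defs.
From mathcomp Require Import all_boot all_algebra.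
Set Implicit Arguments. Unset Strict Implicit.

Section Aux.

Lemma per_mod (s : int -> bool) p :
  (forall t : int, s (t + Posz p)%R = s t) -> forall n, s (Posz n) = s (Posz (n %% p)).
Proof.
move=> hp n; rewrite {1}(divn_eq n p); elim: (n %/ p) => [|k IH]; first by rewrite mul0n add0n.
by rewrite mulSnr -addnAC PoszD hp.
Qed.

Lemma shift_in m (f1 : state m -> bool) s p u :
  generated f1 s -> least_period s p -> u \in Omega m s p -> FSR_F f1 u \in Omega m s p.
Proof.
move=> hg [p0 hp _] /imsetP [i _ ->]; apply/imsetP.
exists (Ordinal (ltn_pmod i.+1 p0)) => //.
apply: eq_from_tnth => j; rewrite !tnth_mktuple /=.
case: ifP => hj.
  have := tnth_nth false [tuple s (Posz ((i + j0) %% p)) | j0 < m] (Ordinal hj).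
  rewrite tnth_mktuple /= => <-.
  by rewrite modnDml addnS addSn.
have jm : j.+1 = m by apply/eqP; rewrite eqn_leq ltn_ord leqNgt hj.
rewrite modnDml addSnnS jm -per_mod //.
have -> : [tuple s (Posz ((i + j0) %% p)) | j0 < m] = [tuple s (Posz i + Posz j0)%R | j0 < m].
  by apply: eq_from_tnth => k; rewrite !tnth_mktuple -PoszD -per_mod.
by rewrite -hg PoszD.
Qed.

Lemma bigmin_seq (T : eqType) (r : seq T) (P : pred T) (F : T -> nat) idx x :
  x \in r -> P x -> \big[minn/idx]_(i <- r | P i) F i <= F x.
Proof.
elim: r => [//|y r IH]; rewrite inE big_cons => /orP [/eqP <- ->|hx hP].
  exact: geq_minl.
case: ifP => _; last exact: IH.
by apply: leq_trans (geq_minr _ _) _; apply: IH.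
Qed.

Lemma minval_le m (A : {set state m}) w : w \in A -> minval A <= tnat w.
Proof. by move=> hw; apply: bigmin_seq => //; rewrite mem_index_enum. Qed.

Definition Ssum n (x : state n.+1) := \sum_(j < n) 2 ^ j * tnth x (lift ord0 j).
Arguments Ssum {n} x.

Lemma tnat_S n (x : state n.+1) : tnat x = tnth x ord0 + 2 * Ssum x.
Proof.
rewrite /tnat big_ord_recl /= expn0 mul1n /Ssum big_distrr /=; congr (_ + _).
by apply: eq_bigr => j _; rewrite /bump /= add1n expnS mulnA.
Qed.

Lemma tnat_F n (f1 : state n.+1 -> bool) x :
  tnat (FSR_F f1 x) = Ssum x + 2 ^ n * f1 x.
Proof.
rewrite /tnat big_ord_recr /= tnth_mktuple /= ltnn; congr (_ + _).
apply: eq_bigr => j _; rewrite tnth_mktuple /= ltnS ltn_ord (tnth_nth false x (lift ord0 j)).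
by [].
Qed.

Lemma S_xor n (u : state n.+1) : Ssum (xor_e0 u) = Ssum u.
Proof.
by apply: eq_bigr => j _; rewrite !tnth_mktuple /= addbF.
Qed.

End Aux.

Theorem lemma3 (m : nat) (f1 : m.-tuple bool -> bool)
  (s t : int -> bool) (p q : nat) (u : m.-tuple bool) :
  (0 < m)%N ->
  nonsingular f1 ->
  generated f1 s -> least_period s p ->
  generated f1 t -> least_period t q ->
  u \in Omega m s p ->
  xor_e0 u \in Omega m t q ->
  (minval (Omega m s p :|: Omega m t q) < minn (tnat u) (tnat (xor_e0 u)))%N
  \/ u \in [set zero_state m; e0 m].
Proof.
case: m f1 u => [//|n] f1 u _ hbij hgs hps hgt hpt hu hu'.
have Fu := shift_in hgs hps hu.
have Fu' := shift_in hgt hpt hu'.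
case: (boolP [forall j : 'I_n, ~~ tnth u (lift ord0 j)]) => hall.
  right; rewrite !inE; apply/orP.
  case h0: (tnth u ord0); [right|left]; apply/eqP; apply: eq_from_tnth => j;
    rewrite tnth_mktuple; case: (unliftP ord0 j) => [k ->|->] //=;
    by move/forallP: hall => /(_ k) /negbTE.
left.
have Spos : 0 < Ssum u.
  move/forallPn: hall => [j]; rewrite negbK => hj.
  rewrite /Ssum (bigD1 j) //= hj muln1; apply: ltn_addr; exact: expn_gt0.
have [z [zin zle]] : exists z, z \in Omega n.+1 s p :|: Omega n.+1 t q /\ tnat z = Ssum u.
  case hb: (f1 u).
    case hb': (f1 (xor_e0 u)).
      exfalso.
      have e : FSR_F f1 u = FSR_F f1 (xor_e0 u).
        apply: eq_from_tnth => j; rewrite !tnth_mktuple; case: ifP => hj; last by rewrite hb hb'.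
        have := tnth_nth false u (Ordinal hj); have := tnth_nth false (xor_e0 u) (Ordinal hj).
        rewrite !tnth_mktuple /= => <- <-. by case: (tnth u _).
      have := congr1 (fun x => tnth x ord0) (bij_inj hbij e).
      rewrite !tnth_mktuple /=; by case: (tnth u ord0).
    exists (FSR_F f1 (xor_e0 u)); split; first by rewrite inE Fu' orbT.
    by rewrite tnat_F hb' muln0 addn0 S_xor.
  exists (FSR_F f1 u); split; first by rewrite inE Fu.
  by rewrite tnat_F hb muln0 addn0.
apply: (leq_ltn_trans (minval_le zin)); rewrite zle.
rewrite leq_min !tnat_S S_xor; apply/andP; split;
  apply: leq_trans (leq_addl _ _); by rewrite mul2n -addnn -{1}(addn0 (Ssum u)) ltn_add2l.
Qed.
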